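(* Let $w=w_1\cdots w_N$ be a 132-avoiding sorting network of $\mathfrak S_n$ and $k\in[N-1]$, and let $u=(Q^{\to}_w)^{-1}(k)$ be the cell of $Q^\to_w$ containing $k$. Then $(w_k,w_{k+1})=(j,j+1)$ for some $j$ if and only if $(Q^\to_w,u)$ is a horizontal adjacency; and $(w_k,w_{k+1})=(j+1,j)$ for some $j$ if and only if $(Q^\to_w,u)$ is a vertical adjacency.
   Context: $N=\binom n2$; sorting networks, intermediate permutations and 132-avoidance as usual ($\sigma_k$ is $\sigma_{k-1}$ with entries in positions $w_k,w_k+1$ swapped; 132-avoiding means all $\sigma_k$ avoid 132). For a 132-avoiding sorting network $w$, $Q_w$ is the filling in which, for each $j\in[n-1]$, column $j$ contains from top to bottom the indices $m$ with $w_m=j$ in increasing order; it is a standard Young tableau of staircase shape $(n-1,\dots,1)$. $Q^\to_w$ is obtained by shifting row $i$ of $Q_w$ to the right by $i-1$ (cell $(i,j)\mapsto(i,i+j-1)$); it is a shifted standard Young tableau of shape $\{(i,j):1\le i\le j\le n-1\}$. For a (shifted) standard tableau $T$ with cell set $D$ and $u=(i,j)\in D$: $(T,u)$ is a horizontal adjacency if $(i,j+1)\in D$ and $T(i,j+1)=T(u)+1$; a vertical adjacency if $(i+1,j)\in D$ and $T(i+1,j)=T(u)+1$. *)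

(* Defs.v *)
(* All indices are 1-based as in the paper. *)
From mathcomp Require Import all_boot.
Set Implicit Arguments. Unset Strict Implicit. Unset Printing Implicit Defensive.

Definition letter (w : seq nat) (m : nat) : nat := nth 0 w m.-1.

Definition swap_adj (s : seq nat) (p : nat) : seq nat :=
  let a := nth 0 s p.-1 in let b := nth 0 s p in
  set_nth 0 (set_nth 0 s p.-1 b) p a.

Definition sigma (n : nat) (w : seq nat) (k : nat) : seq nat :=
  foldl swap_adj (iota 1 n) (take k w).

Definition sorting_network (n : nat) (w : seq nat) : Prop :=
  [/\ size w = 'C(n, 2),
      all (fun x => (1 <= x) && (x <= n.-1)) w
    & sigma n w 'C(n, 2) = rev (iota 1 n)].

Definition avoids132 (s : seq nat) : Prop :=
  forall a b c, a < b -> b < c -> c < size s ->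
    ~ (nth 0 s a < nth 0 s c /\ nth 0 s c < nth 0 s b).

Definition avoiding132_network (n : nat) (w : seq nat) : Prop :=
  forall k, k <= 'C(n, 2) -> avoids132 (sigma n w k).

(* Q_w(i,j): the i-th smallest index m with w_m = j *)
Definition Qw (w : seq nat) (i j : nat) : nat :=
  nth 0 [seq m <- iota 1 (size w) | letter w m == j] i.-1.

Definition Qshift (w : seq nat) (i c : nat) : nat := Qw w i (c - i).+1.

Definition inD (n i c : nat) : bool := [&& 1 <= i, i <= c & c <= n.-1].

(* the cell of Q_w containing k: column w_k, row = #{m <= k : w_m = w_k};
   the cell of Q^->_w containing k is its shift *)
Definition cellQ (w : seq nat) (k : nat) : nat * nat :=
  (count (fun m => letter w m == letter w k) (iota 1 k), letter w k).
Definition cellQshift (w : seq nat) (k : nat) : nat * nat :=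
  let: (i, j) := cellQ w k in (i, i + j - 1).

Definition hadj (n : nat) (w : seq nat) (u : nat * nat) : bool :=
  let: (i, c) := u in
  [&& inD n i c, inD n i c.+1 & Qshift w i c.+1 == (Qshift w i c).+1].

Definition vadj (n : nat) (w : seq nat) (u : nat * nat) : bool :=
  let: (i, c) := u in
  [&& inD n i c, inD n i.+1 c & Qshift w i.+1 c == (Qshift w i c).+1].

(* Main.v *)
Require Import Defs.
From mathcomp Require Import all_boot zify.
Set Implicit Arguments. Unset Strict Implicit. Unset Printing Implicit Defensive.

Fixpoint vl (pre s : seq nat) : seq nat :=
  if s is z :: s' then count (fun u => z < u) pre :: vl (z :: pre) s' else [::].

Lemma vl_perm s pre pre' : perm_eq pre pre' -> vl pre s = vl pre' s.
Proof.
elim: s pre pre' => [|z s IH] pre pre' H //=.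
rewrite (IH _ (z :: pre')); last by rewrite perm_cons.
by rewrite ((permP H) (fun u => z < u)).
Qed.

Lemma vl_cat pre x y : vl pre (x ++ y) = vl pre x ++ vl (catrev x pre) y.
Proof. by elim: x pre => [|z x IH] pre //=; rewrite IH. Qed.

Lemma swap_cat x a b y : swap_adj (x ++ a :: b :: y) (size x).+1 = x ++ b :: a :: y.
Proof.
elim: x => [|z x IH] //=.
move: IH; rewrite /swap_adj /= => ->. by [].
Qed.

Lemma decomp (s : seq nat) p : 1 <= p -> p < size s ->
  exists x a b y, s = x ++ a :: b :: y /\ size x = p.-1.
Proof.
move=> h1 h2. exists (take p.-1 s).
case E: (drop p.-1 s) => [|a [|b y]].
- have := size_drop p.-1 s; rewrite E /=; lia.
- have := size_drop p.-1 s; rewrite E /=; lia.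
exists a, b, y; split; first by rewrite -E cat_take_drop.
rewrite size_take; case: ifP; lia.
Qed.

Lemma nth_catr (l1 l2 : seq nat) i : nth 0 (l1 ++ l2) (size l1 + i) = nth 0 l2 i.
Proof. by rewrite nth_cat ltnNge leq_addr /= addKn. Qed.

Lemma not132 x1 x2 x3 x4 u v z : u < z -> z < v ->
  ~ avoids132 (x1 ++ u :: x2 ++ v :: x3 ++ z :: x4).
Proof.
move=> h1 h2 H.
pose S := x1 ++ u :: x2 ++ v :: x3 ++ z :: x4. change (avoids132 S) in H.
have e1 : nth 0 S (size x1) = u by rewrite nth_cat ltnn subnn.
have e2 : nth 0 S (size x1 + (size x2).+1) = v.
  by rewrite nth_catr /= nth_cat ltnn subnn.
have e3 : nth 0 S (size x1 + (size x2).+1 + (size x3).+1) = z.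
  by rewrite -addnA nth_catr /= nth_catr /= nth_cat ltnn subnn.
apply: (H (size x1) (size x1 + (size x2).+1) (size x1 + (size x2).+1 + (size x3).+1)).
- lia.
- lia.
- rewrite /S; repeat rewrite size_cat /=; lia.
by rewrite e1 e2 e3.
Qed.

Lemma sigmaS n w k : k < size w -> sigma n w k.+1 = swap_adj (sigma n w k) (letter w k.+1).
Proof. by move=> h; rewrite /sigma (take_nth 0) // foldl_rcons. Qed.

Lemma perm_sw (x : seq nat) a b y : perm_eq (x ++ a :: b :: y) (x ++ b :: a :: y).
Proof. apply/permP => P /=; rewrite !count_cat /=; lia. Qed.

Lemma letter_range n w k : sorting_network n w -> k < size w ->
  1 <= letter w k.+1 /\ letter w k.+1 <= n.-1.
Proof.
case=> _ hall _ hk. have: nth 0 w k \in w by rewrite mem_nth.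
by move/(allP hall)/andP.
Qed.

Lemma stepgen (s : seq nat) n p : size s = n -> 1 <= p -> p <= n.-1 ->
  exists x a b y, s = x ++ a :: b :: y /\ swap_adj s p = x ++ b :: a :: y
     /\ (size x).+1 = p.
Proof.
move=> h1 h2 h3.
have hp : p < size s by rewrite h1; lia.
have [x [a [b [y [E Ex]]]]] := decomp h2 hp.
exists x, a, b, y; split => //; split; last by lia.
have -> : p = (size x).+1 by lia.
by rewrite E swap_cat.
Qed.

Lemma basic n w k : sorting_network n w -> k <= size w ->
  size (sigma n w k) = n /\ uniq (sigma n w k).
Proof.
move=> hs; elim: k => [|k IH] hk.
  by rewrite /sigma take0 /= size_iota iota_uniq.
have [IH1 IH2] := IH (ltnW hk).
have [l1 l2] := letter_range hs hk.
have [x [a [b [y [E [E2 _]]]]]] := stepgen IH1 l1 l2.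
rewrite sigmaS // E2; split.
  by rewrite -IH1 E !size_cat.
by rewrite -(perm_uniq (perm_sw x a b y)) -E.
Qed.

Lemma stepP n w k : sorting_network n w -> k < size w ->
 exists x a b y, sigma n w k = x ++ a :: b :: y /\ sigma n w k.+1 = x ++ b :: a :: y
   /\ (size x).+1 = letter w k.+1 /\ a != b /\ size (x ++ a :: b :: y) = n
   /\ uniq (x ++ a :: b :: y).
Proof.
move=> hs hk.
have [IH1 IH2] := basic hs (ltnW hk).
have [l1 l2] := letter_range hs hk.
have [x [a [b [y [E [E2 E3]]]]]] := stepgen IH1 l1 l2.
exists x, a, b, y; rewrite sigmaS // E2 -E; do !split => //.
move: IH2; rewrite E cat_uniq => /and3P [_ _] /=.
by rewrite inE negb_or => /andP [/andP [] ].
Qed.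

Definition Vl s := vl [::] s.

Lemma Vl_swap (x : seq nat) a b y :
  Vl (x ++ a :: b :: y) = Vl x ++ count (fun u => a < u) (rev x) ::
     (b < a) + count (fun u => b < u) (rev x) :: vl (b :: a :: rev x) y /\
  Vl (x ++ b :: a :: y) = Vl x ++ count (fun u => b < u) (rev x) ::
     (a < b) + count (fun u => a < u) (rev x) :: vl (b :: a :: rev x) y.
Proof.
rewrite /Vl !vl_cat /=; split => //.
by rewrite (vl_perm y (perm_sw [::] a b (rev x))).
Qed.

Lemma vl_revi m pre : all (fun u => m < u) pre -> vl pre (rev (iota 1 m)) = iota (size pre) m.
Proof.
elim: m pre => [|m IH] pre h //.
have -> : iota 1 m.+1 = iota 1 m ++ [:: m.+1] by rewrite -[m.+1]addn1 iotaD addnC.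
rewrite rev_cat /=.
have -> : count (fun u => m.+1 < u) pre = size pre by apply/eqP; rewrite -all_count.
rewrite IH //= ltnSn /=.
by apply: sub_all h => u /= /ltnW.
Qed.

Lemma sumn_iota0 n : sumn (iota 0 n) = 'C(n, 2).
Proof.
elim: n => [|n IH] //.
have -> : iota 0 n.+1 = iota 0 n ++ [:: n] by rewrite -addn1 iotaD.
by rewrite sumn_cat IH /= binS bin1 addn0.
Qed.

Lemma vl_iota m k pre : all (fun u => u < m) pre -> vl pre (iota m k) = nseq k 0.
Proof.
elim: k m pre => [|k IH] m pre h //=.
have -> : count (fun u => m < u) pre = 0.
  apply/eqP; rewrite -leqn0 leqNgt -has_count; apply/hasPn => u /(allP h) /=; lia.
rewrite IH //= ltnSn /=; apply: sub_all h => u /= /ltnW; lia.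
Qed.

Definition Sg n w k := sumn (Vl (sigma n w k)).

Lemma Sg_step n w k x a b y : sigma n w k = x++a::b::y -> sigma n w k.+1 = x++b::a::y ->
  Sg n w k.+1 + (b < a) = Sg n w k + (a < b).
Proof.
move=> E1 E2; rewrite /Sg E1 E2; have [-> ->] := Vl_swap x a b y.
rewrite !sumn_cat /=; lia.
Qed.

Lemma Sg_le n w k d : sorting_network n w -> k + d <= size w -> Sg n w (k + d) <= Sg n w k + d.
Proof.
move=> hs; elim: d => [|d IH] h; first by rewrite !addn0.
have hk : k + d < size w by lia.
have [x [a [b [y [E1 [E2 _]]]]]] := stepP hs hk.
have := Sg_step E1 E2. rewrite addnS. have := IH (ltnW hk). lia.
Qed.

Lemma Sg0 n w : Sg n w 0 = 0.
Proof. by rewrite /Sg /sigma take0 /= /Vl vl_iota // sumn_nseq. Qed.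

Lemma Sg_final n w : sorting_network n w -> Sg n w (size w) = size w.
Proof.
case=> h1 h2 h3; rewrite /Sg h1 h3 /Vl vl_revi //= sumn_iota0 //.
Qed.

Lemma asc n w k x a b y : sorting_network n w -> k < size w ->
  sigma n w k = x++a::b::y -> sigma n w k.+1 = x++b::a::y -> a != b -> a < b.
Proof.
move=> hs hk E1 E2 hab.
case: (ltngtP a b) => // hba; last by rewrite hba eqxx in hab.
have e := Sg_step E1 E2. rewrite hba ltnNge (ltnW hba) /= in e.
have h1 := Sg_le (k:=0) (d:=k) hs (ltnW hk). rewrite Sg0 add0n in h1.
have h2 := Sg_le (k:=k.+1) (d:=size w - k.+1) hs. rewrite subnKC // in h2.
have h3 := Sg_final hs. have := h2 (leqnn _). lia.
Qed.

Lemma lrmin (x : seq nat) (a b : nat) (y : seq nat) : uniq (x ++ a :: b :: y) -> a < b -> avoids132 (x ++ b :: a :: y) ->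
  all (fun u => a < u) x.
Proof.
move=> hu hab hav; apply/allP => u ux.
rewrite ltnNge leq_eqVlt negb_or; apply/andP; split.
  apply/negP => /eqP eu; subst u.
  move: hu; rewrite cat_uniq => /and3P [_ /hasPn H _].
  by move: (H a); rewrite inE eqxx ux => /(_ isT).
apply/negP => hua.
case/splitPr: ux hav => x1 x2; rewrite -catA /= => hav.
exact: (not132 (x3:=[::]) hua hab hav).
Qed.

Lemma vl_bound pre s v : v \in vl pre s -> v < size pre + size s.
Proof.
elim: s pre => [|z s IH] pre //=; rewrite inE => /orP [/eqP -> | /IH].
  have := count_size (fun u => z < u) pre; lia.
by rewrite /= addSn addnS.
Qed.

Lemma vl_mem pre y v : v \in vl pre y ->
  exists y1 c y2, y = y1 ++ c :: y2 /\ v = count (fun u => c < u) (catrev y1 pre).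
Proof.
elim: y pre => [|z y IH] pre //=; rewrite inE => /orP [/eqP -> | /IH].
  by exists [::], z, y.
move=> [y1 [c [y2 [E1 E2]]]]; exists (z :: y1), c, y2; by rewrite E1 E2.
Qed.

Lemma zero_eq (x : seq nat) (a b : nat) (y : seq nat) : uniq (x++a::b::y) -> a < b -> avoids132 (x++a::b::y) ->
  avoids132 (x++b::a::y) -> count (pred1 (size x).+1) (Vl (x ++ a::b::y)) = 0.
Proof.
move=> hu hab h1 h2.
have hx := lrmin hu hab h2.
have [-> _] := Vl_swap x a b y.
apply/eqP; rewrite -leqn0 leqNgt -has_count; apply/hasPn => v.
rewrite mem_cat inE inE /= => /or3P [hv|/eqP ->|/orP [/eqP ->|hv]].
- have := vl_bound hv; rewrite /= => h; apply/negP => /eqP; lia.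
- have := count_size (fun u => a < u) (rev x); rewrite size_rev => h; apply/negP => /eqP; lia.
- have := count_size (fun u => b < u) (rev x); rewrite size_rev ltnNge (ltnW hab) /= => h.
  apply/negP => /eqP; lia.
have [y1 [c [y2 [Ey Ev]]]] := vl_mem hv; subst v y.
have hca : c != a.
  move: hu; rewrite cat_uniq => /and3P [_ _] /= /andP [].
  rewrite inE negb_or mem_cat inE => /andP [_] /norP [_] /norP [].
  by rewrite eq_sym.
rewrite catrevE count_cat /= count_rev.
case: (ltngtP c a) => hc; last by rewrite hc eqxx in hca.
- have -> : count (fun u => c < u) (rev x) = size x.
    apply/eqP; rewrite -[size x]size_rev -all_count all_rev; apply: sub_all hx => u /=; lia.
  have -> : c < b by lia.
  by apply/negP => /eqP; lia.
- have hcb : ~~ (c < b).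
    apply/negP => hcb. apply: (not132 (x2:=[::]) hc hcb); exact: h1.
  have -> : count (fun u => c < u) y1 = 0.
    apply/eqP; rewrite -leqn0 leqNgt -has_count; apply/hasP => [[u hu1 hu2]].
    case/splitPr: hu1 h1 => y11 y12 h1.
    apply: (not132 (x1:=x) (x2:=b :: y11) hc hu2); rewrite -catA /= in h1; exact: h1.
  rewrite (negbTE hcb) /=.
  have := count_size (fun u => c < u) (rev x); rewrite size_rev => h; apply/negP => /eqP; lia.
Qed.

Definition ge s m := count (fun v => m <= v) (Vl s).
Definition cnt w j k := count (fun m => letter w m == j) (iota 1 k).

Lemma stepA n w k : sorting_network n w -> avoiding132_network n w -> k < size w ->
  exists x a b y, sigma n w k = x++a::b::y /\ sigma n w k.+1 = x++b::a::y /\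
    (size x).+1 = letter w k.+1 /\
    (forall m, ge (sigma n w k.+1) m = ge (sigma n w k) m + (m == (size x).+1)) /\
    size x \in Vl (sigma n w k) /\
    count (pred1 (size x).+1) (Vl (sigma n w k)) = 0 /\
    (forall m, count (pred1 m) (Vl (sigma n w k.+1)) <=
               count (pred1 m) (Vl (sigma n w k)) + (m == (size x).+1)).
Proof.
move=> hs hav hk.
have [x [a [b [y [E1 [E2 [E3 [hab [_ hu]]]]]]]]] := stepP hs hk.
have hlt := asc hs hk E1 E2 hab.
have hN : size w = 'C(n, 2) by case: hs.
have av1 : avoids132 (x ++ a :: b :: y) by rewrite -E1; apply: hav; lia.
have av2 : avoids132 (x ++ b :: a :: y) by rewrite -E2; apply: hav; lia.
have hx := lrmin hu hlt av2.
have cA : count (fun u => a < u) (rev x) = size x.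
  by apply/eqP; rewrite -[size x]size_rev -all_count all_rev.
have [V1 V2] := Vl_swap x a b y.
rewrite cA hlt ltnNge (ltnW hlt) /= in V1 V2.
exists x, a, b, y; do 3 split => //; split; [|split; [|split]].
- move=> m; rewrite /ge E1 E2 V1 V2 !count_cat /= !add0n add1n.
  case: (ltngtP m (size x).+1) => h.
  + have -> : (m <= size x) = true by lia.
    try (have -> : (m <= (size x).+1) = true by lia).
    try (have -> : (m == (size x).+1) = false by apply/eqP; lia).
    lia.
  + have -> : (m <= size x) = false by lia.
    try (have -> : (m <= (size x).+1) = false by lia).
    try (have -> : (m == (size x).+1) = false by apply/eqP; lia).
    lia.
  + have -> : (m <= size x) = false by lia.
    try (have -> : (m <= (size x).+1) = true by lia).
    try (have -> : (m == (size x).+1) = true by apply/eqP; lia).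
    lia.
- by rewrite E1 V1 mem_cat inE eqxx orbT.
- by rewrite E1 zero_eq.
- move=> m; rewrite E1 E2 V1 V2 !count_cat /= !add0n add1n.
  case: (eqVneq m (size x).+1) => [->|h] /=.
  + lia.
  + lia.
Qed.

Lemma cntS w j k : cnt w j k.+1 = cnt w j k + (letter w k.+1 == j).
Proof. by rewrite /cnt -[k.+1]addn1 iotaD count_cat /= addn0 add1n addn1. Qed.

Lemma inv n w k : sorting_network n w -> avoiding132_network n w -> k <= size w ->
 (forall m, 0 < m -> count (pred1 m) (Vl (sigma n w k)) <= 1) /\
 (forall j, 0 < j -> cnt w j k = ge (sigma n w k) j).
Proof.
move=> hs hav; elim: k => [|k IH] hk.
  rewrite /ge /Vl /sigma take0 /= vl_iota //; split => m hm; rewrite count_nseq /=.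
    by case: m hm.
  by rewrite /cnt /=; case: m hm.
have [IH1 IH2] := IH (ltnW hk).
have [x [a [b [y [E1 [E2 [E3 [G [M [Z C]]]]]]]]]] := stepA hs hav hk.
split.
  move=> m hm; have := C m; case: (eqVneq m (size x).+1) => [->|h].
    rewrite Z; lia.
  have := IH1 m hm; lia.
move=> j hj; rewrite cntS G IH2 // -E3 eq_sym //.
Qed.

Lemma vl_ge pre s m : count (fun v => m <= v) (vl pre s) <= size s - (m - size pre).
Proof.
elim: s pre => [|z s IH] pre //=.
have := IH (z :: pre); have := count_size (fun u => z < u) pre; rewrite /=.
case: (leqP m (count (fun u => z < u) pre)) => h /=; lia.
Qed.

Lemma ge_split l j : count (fun v => j <= v) l = count (fun v => j < v) l + count (pred1 j) l.
Proof.
elim: l => //= v l ->; rewrite leq_eqVlt.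
case: (ltngtP j v) => h /=; try rewrite h; try rewrite (gtn_eqF h); try rewrite (ltn_eqF h); lia.
Qed.

Lemma Qw_cnt w k j : 1 <= k -> k <= size w -> letter w k = j -> Qw w (cnt w j k) j = k.
Proof.
case: k => // k _ h2 hj; rewrite /Qw /cnt.
have e : iota 1 (size w) = iota 1 k ++ k.+1 :: iota k.+2 (size w - k.+1).
  have e0 : size w = k + (1 + (size w - k.+1)) by lia.
  rewrite {1}e0 iotaD iotaD /= add1n addn1 //.
have e2 : iota 1 k.+1 = iota 1 k ++ [:: k.+1].
  by rewrite -[k.+1]addn1 iotaD addnC.
rewrite e e2 filter_cat count_cat /= hj eqxx /= addn1 -size_filter /=.
by rewrite nth_cat ltnn subnn.
Qed.

Lemma Qw_mem w i j m : Qw w i j = m -> 0 < m -> letter w m = j.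
Proof.
rewrite /Qw => E hm.
case: (ltnP i.-1 (size [seq m <- iota 1 (size w) | letter w m == j])) => h.
  have : m \in [seq m <- iota 1 (size w) | letter w m == j] by rewrite -E mem_nth.
  by rewrite mem_filter => /andP [/eqP ->].
by rewrite nth_default in E => //; subst m.
Qed.

Lemma ge_bound s m : ge s m <= size s - m.
Proof. have := vl_ge [::] s m; rewrite /ge /Vl /= subn0 //. Qed.

Theorem mainTheorem10 (n : nat) (w : seq nat) (k : nat) :
  sorting_network n w -> avoiding132_network n w ->
  1 <= k -> k <= 'C(n, 2) - 1 ->
  ((exists j, letter w k = j /\ letter w k.+1 = j.+1) <-> hadj n w (cellQshift w k)) /\
  ((exists j, letter w k = j.+1 /\ letter w k.+1 = j) <-> vadj n w (cellQshift w k)).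
Proof.
move=> hs hav hk1 hk2.
have hN : size w = 'C(n, 2) by case: hs.
have hk : k < size w by lia.
have hjr : 1 <= letter w k <= n.-1.
  case: hs => _ hall _; apply: (allP hall). by rewrite /letter mem_nth // (leq_ltn_trans (leq_pred k) hk).
have hjr' := letter_range hs hk.
set j := letter w k in hjr *.
have Ec : cellQshift w k = (cnt w j k, cnt w j k + j - 1) by [].
rewrite Ec; set i := cnt w j k.
have hi : 1 <= i.
  rewrite /i -{1}(prednK hk1) cntS (prednK hk1) /j eqxx; lia.
have Q1 : Qw w i j = k by apply: Qw_cnt => //; lia.
have [x [a [b [y [E1 [E2 [E3 [G [M [Z C]]]]]]]]]] := stepA hs hav hk.
have [I1 I2] := inv hs hav (ltnW hk).
have [J1 J2] := inv hs hav hk.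
have [sz _] := basic hs hk.
have Hi : i = ge (sigma n w k) j by rewrite /i I2 //; lia.
have gs : ge (sigma n w k) j = ge (sigma n w k) j.+1 + count (pred1 j) (Vl (sigma n w k)).
  exact: ge_split.
have hj0 : 0 < j by case/andP: hjr.
split; split.
- move=> [j' [ej ej1]].
  have ex : size x = j by rewrite -ej in ej1; lia.
  have c1 : count (pred1 j) (Vl (sigma n w k)) = 1.
    have h1 : 0 < count (pred1 j) (Vl (sigma n w k)).
      by rewrite -has_count has_pred1 -ex.
    have := I1 j hj0; lia.
  have e1 : cnt w j.+1 k.+1 = i.
    rewrite J2 // G ex eqxx Hi gs c1; lia.
  have Q2 : Qw w i j.+1 = k.+1.
    by rewrite -e1; apply: Qw_cnt => //; rewrite ?ej1 ?ej //; lia.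
  have bnd := ge_bound (sigma n w k.+1) j.+1.
  rewrite sz -J2 // e1 in bnd.
  rewrite /hadj /inD /Qshift.
  have -> : (i + j - 1 - i).+1 = j by lia.
  have -> : ((i + j - 1).+1 - i).+1 = j.+1 by lia.
  rewrite Q1 Q2 eqxx andbT.
  apply/andP; split; apply/and3P; split; lia.
- move=> /and3P [_ _ /eqP H]; rewrite /Qshift in H.
  have e : (i + j - 1 - i).+1 = j by lia.
  have e' : ((i + j - 1).+1 - i).+1 = j.+1 by lia.
  rewrite e e' Q1 in H.
  exists j; split => //; exact: Qw_mem H _.
- move=> [j' [ej ej1]].
  have hj' : 0 < j' by rewrite -ej1; case: hjr'.
  rewrite E3 ej1 in Z G.
  have e1 : cnt w j' k.+1 = i.+1.
    rewrite J2 // G eqxx Hi.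
    have gs2 : ge (sigma n w k) j' = ge (sigma n w k) j'.+1 + count (pred1 j') (Vl (sigma n w k)).
      exact: ge_split.
    rewrite Z -ej in gs2; lia.
  have Q2 : Qw w i.+1 j' = k.+1.
    by rewrite -e1; apply: Qw_cnt => //; lia.
  have bnd := ge_bound (sigma n w k.+1) j'.
  rewrite sz -J2 // e1 in bnd.
  rewrite /vadj /inD /Qshift.
  have -> : (i + j - 1 - i).+1 = j by lia.
  have -> : (i + j - 1 - i.+1).+1 = j' by lia.
  rewrite Q1 Q2 eqxx andbT.
  apply/andP; split; apply/and3P; split; lia.
- move=> /and3P [_ h2 /eqP H]; rewrite /Qshift in H.
  have hj2 : 2 <= j by move: h2 => /and3P [_ ? _]; lia.
  have e : (i + j - 1 - i).+1 = j by lia.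
  have e' : (i + j - 1 - i.+1).+1 = j - 1 by lia.
  rewrite e e' Q1 in H.
  exists (j - 1); split; first by rewrite /j; lia.
  exact: Qw_mem H _.
Qed.
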